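(* Let $\Omega$ be a compact subset of $\mathbb{R}^d$ with a probability measure $\mu$, let $q\in[1,\infty)$, and let $X_N$ be a linear subspace of real-valued functions in $L_q(\Omega)$ defined at every point of $\Omega$. Let $\mathcal{C}_N=\{f=f_R+if_I: f_R,f_I\in X_N\}$. If $X_N\in\mathcal{M}(m,q,C_2,C_3)$, then $\mathcal{C}_N\in\mathcal{M}(m,q,C_22^{-q-1},C_32^{q+1})$.
   Context: $\|f\|_q=\left(\int_\Omega|f|^q\,d\mu\right)^{1/q}$. For a subspace $X$ of $L_q(\Omega)$, $X\in\mathcal{M}(m,q,C_2,C_3)$ (with positive constants $C_2\le C_3$) means that there exist points $\xi^1,\dots,\xi^m\in\Omega$ such that $C_2\|f\|_q^q\le\frac1m\sum_{j=1}^m|f(\xi^j)|^q\le C_3\|f\|_q^q$ for all $f\in X$. *)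

(* Defs.v *)
From HB Require Import structures.
From mathcomp Require Import all_boot all_order all_algebra.
From mathcomp Require Import all_classical all_reals all_analysis.
From mathcomp Require Import complex.
Set Implicit Arguments. Unset Strict Implicit. Unset Printing Implicit Defensive.
Import Order.TTheory GRing.Theory Num.Theory.
Import numFieldNormedType.Exports.
Local Open Scope classical_set_scope.
Local Open Scope ring_scope.

(* R^d as row vectors, equipped with its Borel sigma-algebra
   (the sigma-algebra generated by the open sets of the product topology). *)
Definition Rd (R : realType) (d : nat) : Type := g_sigma_algebraType (@open 'rV[R]_d).

Section Defs.
Variables (R : realType) (d : nat).
Local Notation T := (Rd R d).

Definition Lq_pow (V : Type) (nrm : V -> R) (mu : {measure set T -> \bar R})
  (Omega : set T) (q : R) (f : T -> V) : \bar R :=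
  (\int[mu]_(x in Omega) ((nrm (f x)) `^ q)%:E)%E.

Definition inM (V : Type) (nrm : V -> R) (mu : {measure set T -> \bar R})
  (Omega : set T) (m : nat) (q C2 C3 : R) (X : set (T -> V)) : Prop :=
  exists xi : 'I_m -> T, (forall j, Omega (xi j)) /\
    forall f, X f ->
      (C2%:E * Lq_pow nrm mu Omega q f
         <= ((m%:R)^-1 * \sum_(j < m) (nrm (f (xi j))) `^ q)%:E)%E /\
      (((m%:R)^-1 * \sum_(j < m) (nrm (f (xi j))) `^ q)%:E
         <= C3%:E * Lq_pow nrm mu Omega q f)%E.

Definition is_subspace (X : set (T -> R)) : Prop :=
  X (fun _ => 0) /\ (forall f g, X f -> X g -> X (fun x => f x + g x)) /\
  (forall (a : R) f, X f -> X (fun x => a * f x)).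

Definition in_Lq (mu : {measure set T -> \bar R}) (Omega : set T) (q : R)
  (f : T -> R) : Prop :=
  measurable_fun Omega f /\ (Lq_pow Num.norm mu Omega q f < +oo)%E.

Definition complexify (X : set (T -> R)) : set (T -> R[i]) :=
  [set f | exists fR fI, X fR /\ X fI /\ f = (fun x => fR x +i* fI x)%C].

End Defs.

(* Main.v *)
Require Import Defs.
From HB Require Import structures.
From mathcomp Require Import all_boot all_order all_algebra.
From mathcomp Require Import all_classical all_reals all_analysis.
From mathcomp Require Import complex.
From mathcomp Require Import ring lra measurable_realfun.
Import Order.TTheory GRing.Theory Num.Theory.
Import numFieldNormedType.Exports.
Local Open Scope classical_set_scope.
Local Open Scope ring_scope.

Lemma aux (R : realFieldType) (N A B : R) : 0 <= N -> N ^+ 2 = A ^+ 2 + B ^+ 2 -> A <= B -> 0 <= A -> N <= 2 * B.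
Proof. move=> hN hN2 ab a0. rewrite !expr2 in hN2. nra. Qed.

Lemma pt_le1 (R : realType) (x y q : R) : 0 <= q ->
  `|x| `^ q <= (Num.sqrt (x ^+ 2 + y ^+ 2)) `^ q.
Proof.
move=> q0; apply: ge0_ler_powR => //; rewrite ?nnegrE ?sqrtr_ge0 //.
rewrite -sqrtr_sqr; rewrite ler_sqrt ?addr_ge0 ?sqr_ge0 //.
by rewrite lerDl sqr_ge0.
Qed.

Lemma pt_le2 (R : realType) (x y q : R) : 0 <= q ->
  (Num.sqrt (x ^+ 2 + y ^+ 2)) `^ q <= 2 `^ q * (`|x| `^ q + `|y| `^ q).
Proof.
move=> q0.
have key : forall a b : R, `|a| <= `|b| ->
    Num.sqrt (a ^+ 2 + b ^+ 2) <= 2 * `|b|.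
  move=> a b ab.
  have hN := sqrtr_ge0 (a ^+ 2 + b ^+ 2).
  have hN2 : Num.sqrt (a ^+ 2 + b ^+ 2) ^+ 2 = a ^+ 2 + b ^+ 2
    by rewrite sqr_sqrtr // addr_ge0 // sqr_ge0.
  have ha : a ^+ 2 = `|a| ^+ 2 by rewrite real_normK ?num_real.
  have hb : b ^+ 2 = `|b| ^+ 2 by rewrite real_normK ?num_real.
  have a0 := normr_ge0 a.
  have hN3 : Num.sqrt (a ^+ 2 + b ^+ 2) ^+ 2 = `|a| ^+ 2 + `|b| ^+ 2 by rewrite hN2 ha hb.
  apply: (@aux R _ `|a|) => //.
have p0 : forall z : R, 0 <= z `^ q by move=> z; exact: powR_ge0.
have [xy|yx] := leP `|x| `|y|.
- apply: (le_trans (ge0_ler_powR q0 _ _ (key _ _ xy))); rewrite ?nnegrE ?sqrtr_ge0 ?mulr_ge0 //.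
  rewrite powRM //; apply: ler_wpM2l => //; by rewrite ?lerDl ?lerDr.
- have yx' : `|y| <= `|x| by exact: ltW.
  rewrite addrC.
  apply: (le_trans (ge0_ler_powR q0 _ _ (key _ _ yx'))); rewrite ?nnegrE ?sqrtr_ge0 ?mulr_ge0 //.
  rewrite powRM //; apply: ler_wpM2l => //; by rewrite ?lerDl ?lerDr.
Qed.
Lemma measOmega (R : realType) (d : nat) (Omega : set (Rd R d)) :
  compact (Omega : set 'rV[R]_d) -> measurable Omega.
Proof.
move=> cO.
have cl : closed (Omega : set 'rV[R]_d) by apply: compact_closed => //; exact: hausdorff_space.
have oC := closed_openC cl.
have : measurable (~` (Omega : set (Rd R d))) by apply: sub_sigma_algebra.
by move/measurableC; rewrite setCK.
Qed.

Theorem proposition2p1 (R : realType) (d : nat) (Omega : set (Rd R d))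
  (mu : {measure set (Rd R d) -> \bar R}) (q : R) (X : set (Rd R d -> R))
  (m : nat) (C2 C3 : R) :
  compact (Omega : set 'rV[R]_d) ->
  mu Omega = 1%E ->
  1 <= q ->
  0 < C2 -> C2 <= C3 ->
  is_subspace X ->
  (forall f, X f -> in_Lq mu Omega q f) ->
  inM Num.norm mu Omega m q C2 C3 X ->
  inM (@Normc.normc R) mu Omega m q
      (C2 * 2 `^ (- q - 1)) (C3 * 2 `^ (q + 1)) (complexify X).
Proof.
move=> cO _ q1 C2p C23 _ XL [xi [xiO hX]].
have mO := @measOmega _ _ _ cO.
have q0 : 0 <= q by lra.
exists xi; split => // f [fR [fI [XR [XI ->]]]].
have [mR finR] := XL _ XR.
have [mI finI] := XL _ XI.
have [hR1 hR2] := hX _ XR.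
have [hI1 hI2] := hX _ XI.
move: hR1 hR2 hI1 hI2 finR finI.
rewrite /Lq_pow /=.
have mpR : measurable_fun Omega (fun x => (`|fR x| `^ q)%:E : \bar R).
  apply/measurable_EFinP.
  have H := (@measurableT_comp _ _ _ _ _ _ (fun z : R => z `^ q) Omega (fun x => `|fR x|) (@measurable_powR R q) (@measurableT_comp _ _ _ _ _ _ (@Num.Def.normr _ R) Omega fR (@normr_measurable R setT) mR)).
  exact: H.
have mpI : measurable_fun Omega (fun x => (`|fI x| `^ q)%:E : \bar R).
  apply/measurable_EFinP.
  have H := (@measurableT_comp _ _ _ _ _ _ (fun z : R => z `^ q) Omega (fun x => `|fI x|) (@measurable_powR R q) (@measurableT_comp _ _ _ _ _ _ (@Num.Def.normr _ R) Omega fI (@normr_measurable R setT) mI)).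
  exact: H.
have mpF : measurable_fun Omega
    (fun x => ((Num.sqrt (fR x ^+ 2 + fI x ^+ 2)) `^ q)%:E : \bar R).
  apply/measurable_EFinP.
  have H1 : measurable_fun Omega (fun x => fR x ^+ 2 + fI x ^+ 2).
    by apply: measurable_funD; apply: measurable_funX.
  have H := (@measurableT_comp _ _ _ _ _ _ (fun z : R => z `^ q) Omega _ (@measurable_powR R q) (@measurableT_comp _ _ _ _ _ _ (@Num.sqrt R) Omega _ (continuous_measurable_fun (@sqrt_continuous R)) H1)).
  exact: H.
set A := (\int[mu]_(x in Omega) (`|fR x| `^ q)%:E)%E.
set B := (\int[mu]_(x in Omega) (`|fI x| `^ q)%:E)%E.
set F := (\int[mu]_(x in Omega) ((Num.sqrt (fR x ^+ 2 + fI x ^+ 2)) `^ q)%:E)%E.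
move=> hR1 hR2 hI1 hI2 finR finI.
have pge0 : forall z : R, (0 <= (z `^ q)%:E)%E by move=> z; rewrite lee_fin powR_ge0.
have A0 : (0 <= A)%E by apply: integral_ge0 => x _.
have B0 : (0 <= B)%E by apply: integral_ge0 => x _.
have AF : (A <= F)%E.
  apply: ge0_le_integral => // x _; rewrite lee_fin; exact: pt_le1.
have BF : (B <= F)%E.
  apply: ge0_le_integral => // x _; rewrite lee_fin addrC; exact: pt_le1.
have FAB : (F <= (2 `^ q)%:E * (A + B))%E.
  rewrite /A /B -ge0_integralD // -ge0_integralZl //; last first.
  - by move=> x _; apply: adde_ge0.
  - by apply: emeasurable_funD.
  apply: ge0_le_integral => //.
  - by apply: measurable_funeM; apply: emeasurable_funD.
  - by move=> x _; rewrite -EFinD -EFinM lee_fin; exact: pt_le2.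
have [a Ae] : exists a, A = a%:E by exists (fine A); rewrite fineK // ge0_fin_numE.
have [b Be] : exists b, B = b%:E by exists (fine B); rewrite fineK // ge0_fin_numE.
have finF : (F < +oo)%E.
  by apply: (le_lt_trans FAB); rewrite Ae Be -EFinD -EFinM ltry.
have F0 : (0 <= F)%E by apply: (le_trans A0).
have [r Fe] : exists r, F = r%:E by exists (fine F); rewrite fineK // ge0_fin_numE.
rewrite Fe; rewrite Ae in AF hR1 hR2 A0; rewrite Be in BF hI1 hI2 B0.
rewrite Fe Ae Be in FAB; rewrite Fe in AF BF.
rewrite -EFinD -EFinM !lee_fin in FAB.
rewrite !lee_fin in AF BF A0 B0.
rewrite -!EFinM !lee_fin in hR1 hR2 hI1 hI2 *.
set sa := _ * \sum_(j < m) _ in hR1 hR2.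
set sb := _ * \sum_(j < m) _ in hI1 hI2.
set sF := _ * \sum_(j < m) _.
have m0 : 0 <= (m%:R : R)^-1 by rewrite invr_ge0 ler0n.
have saF : sa <= sF.
  by apply: ler_wpM2l => //; apply: ler_sum => j _; exact: pt_le1.
have sbF : sb <= sF.
  by apply: ler_wpM2l => //; apply: ler_sum => j _; rewrite addrC; exact: pt_le1.
have sFab : sF <= 2 `^ q * (sa + sb).
  apply: (@le_trans _ _ ((m%:R)^-1 * \sum_(j < m) (2 `^ q * (`|fR (xi j)| `^ q + `|fI (xi j)| `^ q)))).
    by apply: ler_wpM2l => //; apply: ler_sum => j _; exact: pt_le2.
  rewrite /sa /sb -mulr_sumr big_split /= le_eqVlt; apply/orP; left; apply/eqP; ring.
have P0 : 0 < 2 `^ q :> R by apply: powR_gt0.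
have KP : 2 `^ (- q - 1) * 2 `^ q = 2^-1 :> R.
  rewrite -powRD; last by apply/implyP => _; rewrite pnatr_eq0.
  by rewrite (_ : - q - 1 + q = - 1) ?powRN ?powRr1 //; ring.
have L2 : 2 `^ (q + 1) = 2 `^ q * 2 :> R.
  by rewrite powRD ?powRr1 //; apply/implyP => _; rewrite pnatr_eq0.
have K0 : 0 <= 2 `^ (- q - 1) :> R by apply: powR_ge0.
split.
- have h1 : C2 * 2 `^ (- q - 1) * r <= C2 * 2 `^ (- q - 1) * (2 `^ q * (a + b)).
    by apply: ler_wpM2l => //; apply: mulr_ge0 => //; exact: ltW.
  have h2 : C2 * 2 `^ (- q - 1) * (2 `^ q * (a + b)) = C2 * (a + b) / 2.
    rewrite (_ : C2 * 2 `^ (- q - 1) * (2 `^ q * (a + b)) = C2 * (2 `^ (- q - 1) * 2 `^ q) * (a + b)); last by ring.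
    rewrite KP. ring.
  lra.
- rewrite L2.
  have h1 : 2 `^ q * (sa + sb) <= 2 `^ q * (C3 * a + C3 * b).
    by apply: ler_wpM2l; [exact: ltW | lra].
  have h2 : 2 `^ q * (C3 * a + C3 * b) <= 2 `^ q * (C3 * (2 * r)).
    apply: ler_wpM2l; first exact: ltW.
    rewrite -mulrDr; apply: ler_wpM2l; lra.
  have h3 : 2 `^ q * (C3 * (2 * r)) = C3 * (2 `^ q * 2) * r by ring.
  lra.
Qed.
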